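(* For every $\varepsilon>0$ there exists a simple bipartite cubic graph $G$ such that every traveling salesman tour of $G$ has length at least $(1.2-\varepsilon)\,|V(G)|$.
   Context: A traveling salesman tour (TSP tour) of a graph $G$ is a closed walk in $G$ that visits every vertex of $G$; its length is the number of edges traversed, counted with multiplicity. *)

(* Defs.v *)
From HB Require Import structures.
From mathcomp Require Import all_boot all_order all_algebra.
From mathcomp Require Import reals.
Set Implicit Arguments. Unset Strict Implicit. Unset Printing Implicit Defensive.

Definition simple_graph (T : finType) (e : rel T) : Prop :=
  symmetric e /\ irreflexive e.

Definition cubic (T : finType) (e : rel T) : Prop :=
  forall x : T, #|[pred y | e x y]| = 3.

Definition bipartite (T : finType) (e : rel T) : Prop :=
  exists c : T -> bool, forall x y, e x y -> c x != c y.

Definition connected_graph (T : finType) (e : rel T) : Prop :=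
  forall x y : T, connect e x y.

(* A closed walk starting and ending at x, given as x :: p with consecutive
   vertices adjacent; its length is size p (edges counted with multiplicity). *)
Definition tsp_tour (T : finType) (e : rel T) (x : T) (p : seq T) : Prop :=
  path e x p /\ last x p = x /\ (forall v : T, v \in x :: p).

(* Main.v *)
Require Import Defs.
From HB Require Import structures.
From mathcomp Require Import all_boot all_order all_algebra.
From mathcomp Require Import reals.
From mathcomp Require Import zify ring lra.
Set Implicit Arguments. Unset Strict Implicit. Unset Printing Implicit Defensive.

Fixpoint V (k : nat) : finType :=
  match k with
  | 0 => 'I_6
  | k'.+1 => ('I_4 + (V k' + V k'))%type
  end.

Fixpoint tu (k : nat) : V k :=
  match k with 0 => (ord0 : 'I_6) | k'.+1 => inl (ord0 : 'I_4) end.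
Fixpoint tv (k : nat) : V k :=
  match k with 0 => (@Ordinal 6 1 isT) | k'.+1 => inl (@Ordinal 4 1 isT) end.

Definition adj0 (i j : 'I_6) : bool :=
  ((val i, val j) \in [:: (0,4); (4,0); (0,5); (5,0); (2,1); (1,2); (3,1); (1,3);
                        (2,4); (4,2); (2,5); (5,2); (3,4); (4,3); (3,5); (5,3)])%N.
Definition adjS (i j : 'I_4) : bool :=
  ((val i, val j) \in [:: (0,1); (1,0); (0,3); (3,0); (1,2); (2,1)])%N.

Definition link k (i : 'I_4) (w : V k) : bool :=
  ((val i == 2) && (w == tu k)) || ((val i == 3) && (w == tv k)).

Fixpoint adjB (k : nat) : rel (V k) :=
  match k return rel (V k) with
  | 0 => adj0
  | k'.+1 => fun x y =>
    match x, y with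
    | inl i, inl j => adjS i j
    | inl i, inr (inl w) => link i w
    | inl i, inr (inr w) => link i w
    | inr (inl w), inl i => link i w
    | inr (inr w), inl i => link i w
    | inr (inl w), inr (inl w') => adjB w w'
    | inr (inr w), inr (inr w') => adjB w w'
    | _, _ => false
    end
  end.

Definition TG k : finType := (V k + V k)%type.
Definition cross_link k (w w' : V k) : bool :=
  ((w == tv k) && (w' == tu k)) || ((w == tu k) && (w' == tv k)).
Definition eG k : rel (TG k) := fun x y =>
  match x, y with
  | inl w, inl w' => adjB w w'
  | inr w, inr w' => adjB w w'
  | inl w, inr w' => cross_link w w'
  | inr w, inl w' => cross_link w w'
  end.

Lemma tu_neq_tv k : tu k != tv k.
Proof.
by case: k.
Qed.

Lemma adjB_sym k : symmetric (@adjB k).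
Proof.
elim: k => [|k IH].
  by move=> i j; rewrite /adjB /adj0; case: i j => [[|[|[|[|[|[|i]]]]]] Hi] [[|[|[|[|[|[|j]]]]]] Hj].
by move=> [i|[w|w]] [j|[w'|w']] //=; rewrite ?IH //;
  rewrite /adjS; case: i j => [[|[|[|[|i]]]] Hi] [[|[|[|[|j]]]] Hj].
Qed.

Lemma adjB_irr k : irreflexive (@adjB k).
Proof.
elim: k => [|k IH].
  by move=> i; rewrite /adjB /adj0; case: i => [[|[|[|[|[|[|i]]]]]] Hi].
by move=> [i|[w|w]] //=; rewrite ?IH //; rewrite /adjS; case: i => [[|[|[|[|i]]]] Hi].
Qed.

Lemma sum_eq1 (U : finType) (a : U) : \sum_(w : U) ((w == a) : nat) = 1.
Proof.
by rewrite (bigD1 a) //= eqxx big1 // => w /negbTE ->.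
Qed.

Lemma sum_link k (i : 'I_4) : \sum_(w : V k) (link i w : nat) = ((val i == 2) + (val i == 3))%N.
Proof.
rewrite (eq_bigr (fun w => (((val i == 2) : nat) * (w == tu k) + ((val i == 3) : nat) * (w == tv k))%N)).
  by rewrite big_split /= -!big_distrr /= !sum_eq1 !muln1.
move=> w _; rewrite /link.
case E1: (w == tu k); case E2: (w == tv k); try by case: (val i == 2); case: (val i == 3).
by move: (tu_neq_tv k); rewrite -(eqP E1) E2.
Qed.

Lemma sum_link2 k (w : V k) : \sum_(i < 4) (link i w : nat) = ((w == tu k) + (w == tv k))%N.
Proof. by rewrite !big_ord_recl big_ord0 /link /= orbF !add0n addn0. Qed.

Lemma card_sumn (U : finType) (P : pred U) : #|[pred y | P y]| = \sum_(y : U) (P y : nat).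
Proof. by rewrite -sum1_card big_mkcond. Qed.

Lemma nbB k (x : V k) : \sum_(y : V k) (adjB x y : nat) = (3 - (x == tu k) - (x == tv k))%N.
Proof.
elim: k x => [|k IH].
  move=> i; rewrite /adjB /adj0 !big_ord_recl big_ord0.
  by case: i => [[|[|[|[|[|[|i]]]]]] Hi] //; vm_compute.
move=> [i|[w|w]].
- rewrite big_sumType big_sumType /= !sum_link.
  by rewrite /adjS !big_ord_recl big_ord0; case: i => [[|[|[|[|i]]]] Hi].
- rewrite big_sumType big_sumType /= [X in _ + (_ + X)]big1 // addn0 IH sum_link2.
  have H := tu_neq_tv k.
  case: (w =P tu k) => [->|_]; [by rewrite (negbTE H) | by case: (w =P tv k)].
- rewrite big_sumType big_sumType /= [X in _ + (X + _)]big1 // add0n IH sum_link2.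
  have H := tu_neq_tv k.
  case: (w =P tu k) => [->|_]; [by rewrite (negbTE H) | by case: (w =P tv k)].
Qed.

Lemma cross_link_sym k : symmetric (@cross_link k).
Proof. by move=> w w'; rewrite /cross_link orbC andbC [X in _ || X]andbC. Qed.

Lemma eG_sym k : symmetric (@eG k).
Proof. by move=> [w|w] [w'|w'] /=; [apply: adjB_sym | apply: cross_link_sym | apply: cross_link_sym | apply: adjB_sym]. Qed.

Lemma eG_irr k : irreflexive (@eG k).
Proof. by move=> [w|w] /=; rewrite adjB_irr. Qed.

Lemma sum_cross k (w : V k) : \sum_(y : V k) (cross_link w y : nat) = ((w == tv k) + (w == tu k))%N.
Proof.
rewrite (eq_bigr (fun y => (((w == tv k) : nat) * (y == tu k) + ((w == tu k) : nat) * (y == tv k))%N)).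
  by rewrite big_split /= -!big_distrr /= !sum_eq1 !muln1.
move=> y _; rewrite /cross_link.
have H := tu_neq_tv k.
case Ev: (w == tv k); case Eu: (w == tu k); try by case: (y == tu k); case: (y == tv k).
by move: H; rewrite -(eqP Ev) eq_sym Eu.
Qed.

Lemma eG_cubic k : cubic (@eG k).
Proof.
move=> x; rewrite card_sumn big_sumType /=.
have H := tu_neq_tv k.
case: x => [w|w] /=.
- rewrite nbB.
  rewrite (eq_bigr (fun y => (cross_link w y : nat))) // sum_cross.
  case: (w =P tu k) => [->|_]; [by rewrite (negbTE H) | by case: (w =P tv k)].
- rewrite nbB.
  rewrite (eq_bigr (fun y => (cross_link w y : nat))) // sum_cross.
  case: (w =P tu k) => [->|_]; [by rewrite (negbTE H) | by case: (w =P tv k)].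
Qed.

Fixpoint colB k : V k -> bool :=
  match k return V k -> bool with
  | 0 => fun i => (val i \in [:: 1; 4; 5])%N
  | k'.+1 => fun x => match x with
     | inl i => (val i \in [:: 1; 3])%N
     | inr (inl w) => ~~ colB w
     | inr (inr w) => ~~ colB w
     end
  end.

Lemma colB_tu k : colB (tu k) = false. Proof. by case: k. Qed.
Lemma colB_tv k : colB (tv k) = true. Proof. by case: k. Qed.

Lemma colB_ok k (x y : V k) : adjB x y -> colB x != colB y.
Proof.
elim: k x y => [|k IH].
  by move=> [[|[|[|[|[|[|i]]]]]] Hi] [[|[|[|[|[|[|j]]]]]] Hj].
move=> [i|[w|w]] [j|[w'|w']] //=; rewrite ?IH //.
- by case: i j => [[|[|[|[|i]]]] Hi] [[|[|[|[|j]]]] Hj].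
- rewrite /link; case: i => [[|[|[|[|i]]]] Hi] //=; rewrite ?orbF => /eqP ->; by rewrite ?colB_tu ?colB_tv.
- rewrite /link; case: i => [[|[|[|[|i]]]] Hi] //=; rewrite ?orbF => /eqP ->; by rewrite ?colB_tu ?colB_tv.
- rewrite /link; case: j => [[|[|[|[|j]]]] Hj] //=; rewrite ?orbF => /eqP ->; by rewrite ?colB_tu ?colB_tv.
- by move=> /IH; case: (colB w); case: (colB w').
- rewrite /link; case: j => [[|[|[|[|j]]]] Hj] //=; rewrite ?orbF => /eqP ->; by rewrite ?colB_tu ?colB_tv.
- by move=> /IH; case: (colB w); case: (colB w').
Qed.

Lemma eG_bip k : bipartite (@eG k).
Proof.
exists (fun x => match x with inl w => colB w | inr w => colB w end).
move=> [w|w] [w'|w'] /=; try exact: colB_ok; rewrite /cross_link;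
  case/orP => /andP[/eqP -> /eqP ->]; by rewrite colB_tu colB_tv.
Qed.

Lemma connect_hom (A B : finType) (eA : rel A) (eB : rel B) (h : A -> B) :
  (forall x y, eA x y -> eB (h x) (h y)) ->
  forall x y, connect eA x y -> connect eB (h x) (h y).
Proof.
move=> Hh x y /connectP [p Hp ->]; apply/connectP; exists (map h p); last by rewrite last_map.
elim: p x Hp => //= a p IHp x /andP [Hxa Hp]; by rewrite Hh //= IHp.
Qed.


Lemma connB k (x : V k) : connect (@adjB k) x (tu k).
Proof.
elim: k x => [|k IH].
  have c4 : connect (@adjB 0) (@Ordinal 6 4 isT) (tu 0) by apply: connect1.
  have c5 : connect (@adjB 0) (@Ordinal 6 5 isT) (tu 0) by apply: connect1.
  have c2 : connect (@adjB 0) (@Ordinal 6 2 isT) (tu 0).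
    by apply: connect_trans c4; apply: connect1.
  have c3 : connect (@adjB 0) (@Ordinal 6 3 isT) (tu 0).
    by apply: connect_trans c4; apply: connect1.
  have c1 : connect (@adjB 0) (@Ordinal 6 1 isT) (tu 0).
    by apply: connect_trans c2; apply: connect1.
  move=> [[|[|[|[|[|[|i]]]]]] Hi] //.
  + by rewrite (_ : Ordinal Hi = tu 0) ?connect0 //; apply: val_inj.
  + by rewrite (_ : Ordinal Hi = Ordinal (isT : 1 < 6)) //; apply: val_inj.
  + by rewrite (_ : Ordinal Hi = Ordinal (isT : 2 < 6)) //; apply: val_inj.
  + by rewrite (_ : Ordinal Hi = Ordinal (isT : 3 < 6)) //; apply: val_inj.
  + by rewrite (_ : Ordinal Hi = Ordinal (isT : 4 < 6)) //; apply: val_inj.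
  + by rewrite (_ : Ordinal Hi = Ordinal (isT : 5 < 6)) //; apply: val_inj.
have e10 : @adjB k.+1 (inl (@Ordinal 4 1 isT)) (inl ord0) by [].
have e21 : @adjB k.+1 (inl (@Ordinal 4 2 isT)) (inl (@Ordinal 4 1 isT)) by [].
have e30 : @adjB k.+1 (inl (@Ordinal 4 3 isT)) (inl ord0) by [].
have c2 : connect (@adjB k.+1) (inl (@Ordinal 4 2 isT)) (tu k.+1).
  by apply: connect_trans (connect1 e21) (connect1 e10).
move=> [i|[w|w]].
- case: i => [[|[|[|[|i]]]] Hi] //.
  + by rewrite (_ : Ordinal Hi = ord0) ?connect0 //; apply: val_inj.
  + by rewrite (_ : Ordinal Hi = Ordinal (isT : 1 < 4)) ?(connect1 e10) //; apply: val_inj.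
  + by rewrite (_ : Ordinal Hi = Ordinal (isT : 2 < 4)) //; apply: val_inj.
  + by rewrite (_ : Ordinal Hi = Ordinal (isT : 3 < 4)) ?(connect1 e30) //; apply: val_inj.
- apply: connect_trans c2.
  apply: connect_trans (connect_hom (h := fun w => (inr (inl w) : V k.+1)) _ (IH w)) _ => //.
  apply: connect1 => /=; by rewrite /link /= eqxx.
- apply: connect_trans c2.
  apply: connect_trans (connect_hom (h := fun w => (inr (inr w) : V k.+1)) _ (IH w)) _ => //.
  apply: connect1 => /=; by rewrite /link /= eqxx.
Qed.

Lemma eG_conn k : connected_graph (@eG k).
Proof.
have Hs : connect_sym (@eG k) by apply: sym_connect_sym; apply: eG_sym.
have Hl : forall w, connect (@eG k) (inl w) (inl (tu k)).
  by move=> w; apply: (connect_hom (h := fun w => (inl w : TG k))) (connB w).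
have Hr : forall w, connect (@eG k) (inr w) (inl (tu k)).
  move=> w; apply: connect_trans (connect_hom (h := fun w => (inr w : TG k)) _ (connB w)) _ => //.
  apply: connect_trans (Hl (tv k)).
  by apply: connect1; rewrite /= /cross_link !eqxx orbT.
have Hall : forall x, connect (@eG k) x (inl (tu k)) by move=> [w|w].
move=> x y; apply: connect_trans (Hall x) _; by rewrite Hs.
Qed.

Section Walk.
Variable T : finType.

Definition steps (x : T) (p : seq T) := zip (x :: p) p.
Definition isE (ed st : T * T) := (st == ed) || (st == (ed.2, ed.1)).

Lemma steps_edge (e : rel T) (x : T) p st : path e x p -> st \in steps x p -> e st.1 st.2.
Proof.
rewrite /steps; elim: p x => [|a q IH] y //= /andP [Hya Hq].
by rewrite in_cons => /orP [/eqP -> //|]; exact: IH.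
Qed.

Lemma map_fst_steps (x : T) p : map fst (steps x p) = belast x p.
Proof. by rewrite /steps; elim: p x => [|a q IH] y //=; rewrite IH. Qed.

Lemma map_snd_steps (x : T) p : map snd (steps x p) = p.
Proof. by rewrite /steps; elim: p x => [|a q IH] y //=; rewrite IH. Qed.

Lemma count_belast (x : T) p (y : T) : last x p = x -> count_mem y (belast x p) = count_mem y p.
Proof.
move=> Hl.
have := congr1 (count_mem y) (lastI x p).
by rewrite -cats1 count_cat Hl /= addn0 [in RHS]addnC => /addnI.
Qed.

Lemma cross_parity (S : pred T) y q :
  odd (count (fun st : T * T => S st.1 != S st.2) (zip (y :: q) q)) = (S y != S (last y q)).
Proof.
elim: q y => [|a q IH] y /=; first by case: (S y).
rewrite oddD IH /=.
by case: (S y); case: (S a); case: (S (last a q)).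
Qed.

Lemma cross_pos (S : pred T) y q a : a \in y :: q -> S a != S y ->
  0 < count (fun st : T * T => S st.1 != S st.2) (zip (y :: q) q).
Proof.
elim: q y => [|b q IH] y /=.
  by rewrite inE => /eqP ->; rewrite eqxx.
rewrite inE => /orP [/eqP ->|Ha]; first by rewrite eqxx.
case E: (S y != S b) => //= Hay.
apply: (IH b Ha).
by move/negbFE/eqP: E => <-.
Qed.

Lemma sum_count_mem (s : seq T) : \sum_(y : T) count_mem y s = size s.
Proof.
elim: s => [|a s IH] /=; first by rewrite big1.
rewrite big_split /= IH (bigD1 a) //= eqxx big1 ?add1n // => y /negbTE.
by rewrite eq_sym => ->.
Qed.

Lemma isE_trans (a b st : T * T) : isE a st -> isE b st -> isE a b.
Proof.
case: a b st => [a1 a2] [b1 b2] [s1 s2]; rewrite /isE /= !xpair_eqE.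
case/orP => /andP [/eqP <- /eqP <-]; case/orP => /andP [/eqP -> /eqP ->]; by rewrite !eqxx ?orbT.
Qed.

Lemma count_has_disj (s : seq (T * T)) (ES : seq (T * T)) :
  pairwise (fun a b => ~~ isE a b) ES ->
  count (fun st => has (isE^~ st) ES) s = \sum_(ed <- ES) count (isE ed) s.
Proof.
elim: ES => [|a ES IH] /=; first by rewrite big_nil; elim: s.
move=> /andP [Ha Hp]; rewrite big_cons -IH //.
have H0 : count (predI (isE a) (fun st => has (isE^~ st) ES)) s = 0.
  rewrite (eq_count (a2 := pred0)) ?count_pred0 // => st /=.
  apply/negbTE/andP => -[Ea /hasP [b Hb Ebst]].
  by move/allP: Ha => /(_ b Hb); rewrite (isE_trans Ea Ebst).
by rewrite -count_predUI H0 addn0.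
Qed.

End Walk.

Section Tour.
Variables (T : finType) (e : rel T) (x : T) (p : seq T).
Hypotheses (Hirr : irreflexive e) (Ht : tsp_tour e x p) (Hnt : exists z, z != x).

Definition Ne (y z : T) := count (isE (y, z)) (steps x p).
Definition vis (y : T) := count_mem y p.
Definition cross (S : pred T) := count (fun st : T * T => S st.1 != S st.2) (steps x p).

Lemma Hpath : path e x p. Proof. by case: Ht. Qed.
Lemma Hlast : last x p = x. Proof. by case: Ht => _ []. Qed.
Lemma Hall v : v \in x :: p. Proof. by case: Ht => _ [] _. Qed.

Lemma vis_ge1 y : 0 < vis y.
Proof.
rewrite /vis -has_count has_pred1.
have Hp : p != [::].
  case: Hnt => z; apply: contra_neqN => /eqP Ep.
  by have := Hall z; rewrite Ep inE => /eqP.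
have := Hall y; rewrite inE => /orP [/eqP ->|//].
case: p Hp Hlast => // a q _ /= <-; exact: mem_last.
Qed.

Lemma cross_ge2 (S : pred T) : (exists a, S a) -> (exists b, ~~ S b) -> 2 <= cross S.
Proof.
move=> [a Ha] [b Hb].
have Hodd : ~~ odd (cross S) by rewrite /cross /steps cross_parity Hlast eqxx.
have Hpos : 0 < cross S.
  case E: (S x).
  - by apply: (cross_pos (a := b)); rewrite ?Hall // E (negbTE Hb).
  - by apply: (cross_pos (a := a)); rewrite ?Hall // E Ha.
move: Hodd Hpos; case: (cross S) => [|[|n]] //.
Qed.

Lemma deg_vis y : cross (pred1 y) = 2 * vis y.
Proof.
rewrite /cross.
have H0 : count (predI (fun st : T * T => st.1 == y) (fun st => st.2 == y)) (steps x p) = 0.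
  rewrite (eq_in_count (a2 := pred0)) ?count_pred0 // => st Hst /=.
  apply/negbTE/andP => -[/eqP E1 /eqP E2].
  by have := steps_edge Hpath Hst; rewrite E1 E2 Hirr.
have -> : count (fun st : T * T => pred1 y st.1 != pred1 y st.2) (steps x p) =
  count (predU (fun st : T * T => st.1 == y) (fun st => st.2 == y)) (steps x p).
  apply: eq_in_count => st Hst /=.
  have := steps_edge Hpath Hst.
  case: (st.1 =P y) => [->|]; case: (st.2 =P y) => [->|] //=.
  by rewrite Hirr.
have := count_predUI (fun st : T * T => st.1 == y) (fun st => st.2 == y) (steps x p).
rewrite H0 addn0 => ->.
rewrite -(count_map fst (pred1 y)) -(count_map snd (pred1 y)) map_fst_steps map_snd_steps.
by rewrite count_belast ?Hlast // addnn -mul2n.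
Qed.

Lemma size_vis : size p = \sum_(y : T) vis y.
Proof. by rewrite /vis sum_count_mem. Qed.

End Tour.

Record Emb (T : finType) (e : rel T) (k : nat) := {
  ef : V k -> T; ebu : T; ebv : T;
  ef_inj : injective ef;
  ef_edge : forall w w', e (ef w) (ef w') = adjB w w';
  ef_out : forall w z, e (ef w) z ->
     (exists w', z = ef w') \/ (w = tu k /\ z = ebu) \/ (w = tv k /\ z = ebv);
  ebu_out : forall w, (ef w == ebu) = false;
  ebv_out : forall w, (ef w == ebv) = false }.

Section Cut.
Variables (T : finType) (e : rel T) (x : T) (p : seq T).
Hypotheses (Hsym : symmetric e) (Ht : tsp_tour e x p).
Variables (k : nat) (E : Emb e k).

Local Notation f := (ef E).
Local Notation bu := (ebu E).
Local Notation bv := (ebv E).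

Let f_inj : injective f := @ef_inj _ _ _ E.
Let f_edge := @ef_edge _ _ _ E.
Let f_out := @ef_out _ _ _ E.
Let bu_out := @ebu_out _ _ _ E.
Let bv_out := @ebv_out _ _ _ E.

Definition inS (P : pred (V k)) : pred T := fun z => [exists w, (z == f w) && P w].

Lemma inS_ef P w : inS P (f w) = P w.
Proof.
apply/existsP/idP => [[w' /andP [/eqP /f_inj -> //]]| Hw].
by exists w; rewrite eqxx.
Qed.

Lemma inS_out P z : (forall w, (f w == z) = false) -> inS P z = false.
Proof.
move=> H; apply/existsP => -[w /andP [/eqP Ez _]].
by move: (H w); rewrite Ez eqxx.
Qed.

Lemma ebu_out' w : (bu == f w) = false. Proof. by rewrite eq_sym bu_out. Qed.
Lemma ebv_out' w : (bv == f w) = false. Proof. by rewrite eq_sym bv_out. Qed.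

Lemma ftu_ftv : (f (tu k) == f (tv k)) = false.
Proof. by rewrite (inj_eq f_inj) (negbTE (tu_neq_tv k)). Qed.

Definition bES (P : pred (V k)) : seq (T * T) :=
  (if P (tu k) then [:: (f (tu k), bu)] else [::]) ++
  (if P (tv k) then [:: (f (tv k), bv)] else [::]).

Definition mES (es : seq (V k * V k)) : seq (T * T) := map (fun ed => (f ed.1, f ed.2)) es.

Lemma isE_pair (a b c d : T) : isE (a, b) (c, d) = ((c == a) && (d == b)) || ((c == b) && (d == a)).
Proof. by rewrite /isE /= !xpair_eqE. Qed.

Lemma isE_pairV (a b c d : V k) : isE (a, b) (c, d) = ((c == a) && (d == b)) || ((c == b) && (d == a)).
Proof. by rewrite /isE /= !xpair_eqE. Qed.

Lemma mES_in (es : seq (V k * V k)) (w w' : V k) : has (fun ed => @isE T ed (f w, f w')) (mES es) = has (fun ed => isE ed (w, w')) es.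
Proof.
rewrite has_map; apply: eq_has => -[a b] /=.
by rewrite isE_pair isE_pairV !(inj_eq f_inj).
Qed.

Lemma mES_out (es : seq (V k * V k)) (y z : T) : (forall w, (f w == y) = false) \/ (forall w, (f w == z) = false) ->
  has (fun ed => @isE T ed (y, z)) (mES es) = false.
Proof.
move=> H; rewrite has_map; apply/hasPn => -[a b] _ /=.
rewrite isE_pair; case: H => H; by rewrite ![y == _]eq_sym ![z == _]eq_sym !H ?andbF.
Qed.

Lemma Hpath' : path e x p. Proof. by case: Ht. Qed.

Lemma bES_f P w w' : has (fun ed => @isE T ed (f w, f w')) (bES P) = false.
Proof.
by rewrite /bES; case: (P (tu k)); case: (P (tv k)) => //=; rewrite !isE_pair ?bu_out ?bv_out ?andbF.
Qed.

Lemma cross_char (P : pred (V k)) (es : seq (V k * V k)) (y z : T) :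
  (forall w w', adjB w w' -> (P w != P w') = has (fun ed => isE ed (w, w')) es) ->
  e y z -> (inS P y != inS P z) = has (fun ed => @isE T ed (y, z)) (mES es ++ bES P).
Proof.
move=> HP Eyz; rewrite has_cat.
have Htv := ftu_ftv; rewrite eq_sym in Htv.
case: (pickP (fun w => f w == y)) => [w /eqP Ey|Hy].
- subst y; case: (f_out Eyz) => [[w' Ez]|[[-> ->]|[-> ->]]].
  + subst z; rewrite !inS_ef mES_in bES_f orbF; apply: HP; by rewrite -f_edge.
  + rewrite inS_ef inS_out ?bu_out // mES_out; last by right.
    rewrite /bES; case: (P (tu k)); case: (P (tv k)) => //=;
    by rewrite !isE_pair ?eqxx ?ftu_ftv ?Htv ?ebu_out' ?ebv_out' ?bu_out ?bv_out ?andbF ?andbT.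
  + rewrite inS_ef inS_out ?bv_out // mES_out; last by right.
    rewrite /bES; case: (P (tu k)); case: (P (tv k)) => //=;
    by rewrite !isE_pair ?eqxx ?ftu_ftv ?Htv ?ebu_out' ?ebv_out' ?bu_out ?bv_out ?andbF ?andbT.
- case: (pickP (fun w => f w == z)) => [w /eqP Ez|Hz].
  + subst z; have Ezy : e (f w) y by rewrite Hsym.
    case: (f_out Ezy) => [[w' Ey]|[[-> ->]|[-> ->]]].
    * by move: (Hy w'); rewrite Ey eqxx.
    * rewrite inS_ef inS_out ?bu_out // mES_out; last by left.
      rewrite /bES; case: (P (tu k)); case: (P (tv k)) => //=;
      by rewrite !isE_pair ?eqxx ?ftu_ftv ?Htv ?ebu_out' ?ebv_out' ?bu_out ?bv_out ?andbF ?andbT ?orbT.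
    * rewrite inS_ef inS_out ?bv_out // mES_out; last by left.
      rewrite /bES; case: (P (tu k)); case: (P (tv k)) => //=;
      by rewrite !isE_pair ?eqxx ?ftu_ftv ?Htv ?ebu_out' ?ebv_out' ?bu_out ?bv_out ?andbF ?andbT ?orbT.
  + rewrite !inS_out // mES_out; last by left.
    rewrite /bES; case: (P (tu k)); case: (P (tv k)) => //=;
    by rewrite !isE_pair ![y == f _]eq_sym ![z == f _]eq_sym ?Hy ?Hz ?andbF.
Qed.

Lemma pairwise_ES P (es : seq (V k * V k)) :
  pairwise (fun a b => ~~ isE a b) es ->
  pairwise (fun a b => ~~ @isE T a b) (mES es ++ bES P).
Proof.
move=> Hes; rewrite pairwise_cat; apply/and3P; split.
- apply/allrelP => a b /mapP [[a1 a2] _ ->] Hb.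
  have Htv := ftu_ftv; rewrite eq_sym in Htv.
  have Hb' : (b == (f (tu k), bu)) || (b == (f (tv k), bv)).
    move: Hb; rewrite /bES; case: (P (tu k)); case: (P (tv k)); rewrite /= ?inE ?orbF //;
    try (by move=> ->); try (by move=> ->; rewrite orbT); by case/orP => ->; rewrite ?orbT.
  by case/orP: Hb' => /eqP ->; rewrite isE_pair /= ?ebu_out' ?ebv_out' ?andbF.
- rewrite /mES pairwise_map; apply: sub_pairwise Hes => -[a1 a2] [b1 b2] /=.
  by rewrite isE_pair isE_pairV !(inj_eq f_inj).
- rewrite /bES; case: (P (tu k)); case: (P (tv k)) => //=.
  have Htv := ftu_ftv; rewrite eq_sym in Htv.
  by rewrite isE_pair Htv bu_out.
Qed.

Lemma cut_count (P : pred (V k)) (es : seq (V k * V k)) :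
  (forall w w', adjB w w' -> (P w != P w') = has (fun ed => isE ed (w, w')) es) ->
  pairwise (fun a b => ~~ isE a b) es ->
  cross x p (inS P) = (\sum_(ed <- es) Ne x p (f ed.1) (f ed.2) +
     (if P (tu k) then Ne x p (f (tu k)) bu else 0) +
     (if P (tv k) then Ne x p (f (tv k)) bv else 0))%N.
Proof.
move=> HP Hpw.
rewrite /cross (eq_in_count (a2 := fun st => has (fun ed => @isE T ed st) (mES es ++ bES P))); last first.
  move=> [y z] Hst; apply: cross_char HP _; exact: (steps_edge Hpath' Hst).
rewrite count_has_disj; last exact: pairwise_ES.
rewrite big_cat big_map /bES -addnA; congr (_ + _).
by case: (P (tu k)); case: (P (tv k)); rewrite /= ?big_cons ?big_nil ?addn0.
Qed.

End Cut.

Definition o0 : 'I_4 := ord0.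
Definition o1 : 'I_4 := @Ordinal 4 1 isT.
Definition o2 : 'I_4 := @Ordinal 4 2 isT.
Definition o3 : 'I_4 := @Ordinal 4 3 isT.

Section Sub.
Variables (T : finType) (e : rel T) (k : nat) (E : Emb e k.+1).
Variable (c : V k -> (V k + V k)%type).
Hypothesis c_inj : injective c.
Hypothesis c_adj : forall w w', adjB (inr (c w) : V k.+1) (inr (c w')) = adjB w w'.
Hypothesis c_link : forall w (i : 'I_4), adjB (inr (c w) : V k.+1) (inl i) = link i w.
Hypothesis c_other : forall w (y : V k.+1), (forall i, y != inl i) -> (forall w', y != inr (c w')) ->
  adjB (inr (c w) : V k.+1) y = false.

Definition sf (w : V k) : T := ef E (inr (c w)).

Lemma sf_inj : injective sf.
Proof. by move=> w w' /(@ef_inj _ _ _ E) [] /c_inj. Qed.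

Lemma sf_edge w w' : e (sf w) (sf w') = adjB w w'.
Proof. by rewrite /sf (@ef_edge _ _ _ E) c_adj. Qed.

Lemma sf_out w z : e (sf w) z ->
  (exists w', z = sf w') \/ (w = tu k /\ z = ef E (inl o2)) \/ (w = tv k /\ z = ef E (inl o3)).
Proof.
move=> H; case: (@ef_out _ _ _ E _ _ H) => [[y Ez]|[[Ew _]|[Ew _]]] //.
subst z; move: H; rewrite (@ef_edge _ _ _ E).
case: y => [i|y].
  rewrite c_link /link => /orP [] /andP [Hi /eqP Hw]; right; [left|right]; split=> //;
  by congr (ef E (inl _)); apply: val_inj; apply/eqP.
case: (pickP (fun w' => y == c w')) => [w' /eqP ->|Hy]; first by left; exists w'.
have H1 : forall i, (inr y : V k.+1) != inl i by [].
have H2 : forall w', (inr y : V k.+1) != inr (c w').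
  by move=> w'; apply/eqP => -[/eqP]; rewrite Hy.
by rewrite c_other.
Qed.

Lemma sf_bu w : (sf w == ef E (inl o2)) = false.
Proof. by rewrite /sf (inj_eq (@ef_inj _ _ _ E)). Qed.
Lemma sf_bv w : (sf w == ef E (inl o3)) = false.
Proof. by rewrite /sf (inj_eq (@ef_inj _ _ _ E)). Qed.

Definition subEmb : Emb e k :=
  @Build_Emb T e k sf (ef E (inl o2)) (ef E (inl o3)) sf_inj sf_edge sf_out sf_bu sf_bv.

End Sub.

Section Sub2.
Variables (k : nat).
Lemma c1_adj (w w' : V k) : adjB (inr (inl w) : V k.+1) (inr (inl w')) = adjB w w'. Proof. by []. Qed.
Lemma c1_link (w : V k) (i : 'I_4) : adjB (inr (inl w) : V k.+1) (inl i) = link i w. Proof. by []. Qed.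
Lemma c1_other (w : V k) (y : V k.+1) : (forall i, y != inl i) -> (forall w', y != inr (inl w')) ->
  adjB (inr (inl w) : V k.+1) y = false.
Proof. by case: y => [i /(_ i)|[w' _ /(_ w')|w']]; rewrite ?eqxx. Qed.
Lemma c2_adj (w w' : V k) : adjB (inr (inr w) : V k.+1) (inr (inr w')) = adjB w w'. Proof. by []. Qed.
Lemma c2_link (w : V k) (i : 'I_4) : adjB (inr (inr w) : V k.+1) (inl i) = link i w. Proof. by []. Qed.
Lemma c2_other (w : V k) (y : V k.+1) : (forall i, y != inl i) -> (forall w', y != inr (inr w')) ->
  adjB (inr (inr w) : V k.+1) y = false.
Proof. by case: y => [i /(_ i)|[w'|w' _ /(_ w')]]; rewrite ?eqxx. Qed.
End Sub2.

Definition sub1 (T : finType) (e : rel T) k (E : Emb e k.+1) : Emb e k :=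
  subEmb E (@inl_inj _ _) (@c1_adj k) (@c1_link k) (@c1_other k).
Definition sub2 (T : finType) (e : rel T) k (E : Emb e k.+1) : Emb e k :=
  subEmb E (@inr_inj _ _) (@c2_adj k) (@c2_link k) (@c2_other k).

Lemma tu_neq_tv' k : (tu k == tv k) = false. Proof. exact: negbTE (tu_neq_tv k). Qed.
Lemma tv_neq_tu' k : (tv k == tu k) = false. Proof. by rewrite eq_sym tu_neq_tv'. Qed.

Lemma sum4 (F : 'I_4 -> nat) : \sum_(i < 4) F i = F o0 + F o1 + F o2 + F o3.
Proof.
rewrite !big_ord_recl big_ord0 addn0 !addnA.
have -> : lift ord0 (lift ord0 (lift ord0 ord0)) = o3 :> 'I_4 by apply: val_inj.
have -> : lift ord0 (lift ord0 ord0) = o2 :> 'I_4 by apply: val_inj.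
by have -> : lift ord0 ord0 = o1 :> 'I_4 by apply: val_inj.
Qed.

Fixpoint sz k := match k with 0 => 6 | k'.+1 => 2 * sz k' + 4 end.
Fixpoint ee k := match k with 0 => 0 | k'.+1 => 2 * ee k' + 2 end.

Section Inv.
Variables (T : finType) (e : rel T) (x : T) (p : seq T).
Hypotheses (Hsym : symmetric e) (Hirr : irreflexive e) (Ht : tsp_tour e x p) (Hnt : exists z, z != x).

Lemma inS_pred1 k (E : Emb e k) (w : V k) z : inS E (pred1 w) z = (z == ef E w).
Proof.
apply/existsP/eqP => [[w' /andP [/eqP -> /eqP ->]] //|->].
by exists w; rewrite /= !eqxx.
Qed.

Lemma vis_cut k (E : Emb e k) (w : V k) (es : seq (V k * V k)) :
  (forall w1 w2, adjB w1 w2 -> (pred1 w w1 != pred1 w w2) = has (fun ed => isE ed (w1, w2)) es) ->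
  pairwise (fun a b => ~~ isE a b) es ->
  2 * vis p (ef E w) = (\sum_(ed <- es) Ne x p (ef E ed.1) (ef E ed.2) +
     (if pred1 w (tu k) then Ne x p (ef E (tu k)) (ebu E) else 0) +
     (if pred1 w (tv k) then Ne x p (ef E (tv k)) (ebv E) else 0))%N.
Proof.
move=> H1 H2; rewrite -(deg_vis Hirr Ht) -(cut_count Hsym Ht E H1 H2).
by apply: eq_count => st /=; rewrite !inS_pred1.
Qed.

Lemma cut2 k (E : Emb e k) (P : pred (V k)) (es : seq (V k * V k)) :
  (forall w1 w2, adjB w1 w2 -> (P w1 != P w2) = has (fun ed => isE ed (w1, w2)) es) ->
  pairwise (fun a b => ~~ isE a b) es -> (exists w, P w) ->
  2 <= (\sum_(ed <- es) Ne x p (ef E ed.1) (ef E ed.2) +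
     (if P (tu k) then Ne x p (ef E (tu k)) (ebu E) else 0) +
     (if P (tv k) then Ne x p (ef E (tv k)) (ebv E) else 0))%N.
Proof.
move=> H1 H2 [w Hw]; rewrite -(cut_count Hsym Ht E H1 H2).
apply: (cross_ge2 Ht); first by exists (ef E w); rewrite inS_ef.
by exists (ebu E); rewrite inS_out // => w'; exact: ebu_out.
Qed.

Lemma bound_all k (E : Emb e k) : 2 <= Ne x p (ef E (tu k)) (ebu E) + Ne x p (ef E (tv k)) (ebv E).
Proof.
have := @cut2 k E predT [::] _ _ _; rewrite big_nil /= add0n; apply => //.
by exists (tu k).
Qed.

End Inv.

Lemma arith_step (vu vv va vb X1 X2 s ee m1 m2 al be ga d1 e1 d2 e2 : nat) :
  2 * vu = m1 + al + be -> 2 * vv = al + ga + m2 -> 2 * va = ga + d1 + d2 -> 2 * vb = be + e1 + e2 ->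
  1 <= vu -> 1 <= vv -> 2 <= be + ga -> 2 <= al + ga + m1 -> 2 <= al + be + m2 -> 2 <= m1 + m2 ->
  2 <= d1 + e1 -> 2 <= d2 + e2 ->
  s + ee + ((d1 == 0) || (e1 == 0)) <= X1 ->
  s + ee + ((d2 == 0) || (e2 == 0)) <= X2 ->
  (2 * s + 4) + (2 * ee + 2) + ((m1 == 0) || (m2 == 0)) <= vu + vv + va + vb + (X1 + X2).
Proof.
move=> *.
case: (d1 =P 0) => [?|?]; case: (e1 =P 0) => [?|?]; case: (d2 =P 0) => [?|?]; case: (e2 =P 0) => [?|?];
case: (m1 =P 0) => [?|?]; case: (m2 =P 0) => [?|?]; simpl in *; lia.
Qed.

Definition n1 : 'I_6 := @Ordinal 6 1 isT.
Definition n2 : 'I_6 := @Ordinal 6 2 isT.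
Definition n3 : 'I_6 := @Ordinal 6 3 isT.
Definition n4 : 'I_6 := @Ordinal 6 4 isT.
Definition n5 : 'I_6 := @Ordinal 6 5 isT.

Lemma sum6 (F : 'I_6 -> nat) : \sum_(i < 6) F i = F ord0 + F n1 + F n2 + F n3 + F n4 + F n5.
Proof.
rewrite !big_ord_recl big_ord0 addn0 !addnA.
have -> : lift ord0 (lift ord0 (lift ord0 (lift ord0 (lift ord0 ord0)))) = n5 :> 'I_6 by apply: val_inj.
have -> : lift ord0 (lift ord0 (lift ord0 (lift ord0 ord0))) = n4 :> 'I_6 by apply: val_inj.
have -> : lift ord0 (lift ord0 (lift ord0 ord0)) = n3 :> 'I_6 by apply: val_inj.
have -> : lift ord0 (lift ord0 ord0) = n2 :> 'I_6 by apply: val_inj.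
by have -> : lift ord0 ord0 = n1 :> 'I_6 by apply: val_inj.
Qed.

Lemma arith_base (v0 v1 v2 v3 v4 v5 m1 m2 a b c d : nat) :
  1 <= v0 -> 1 <= v1 -> 1 <= v2 -> 1 <= v3 -> 1 <= v4 -> 1 <= v5 ->
  2 * v1 = a + b + m2 -> 2 <= a + b + m1 -> 2 * v0 = c + d + m1 -> 2 <= c + d + m2 ->
  2 <= m1 + m2 ->
  6 + ((m1 == 0) || (m2 == 0)) <= v0 + v1 + v2 + v3 + v4 + v5.
Proof.
move=> *; case: (m1 =P 0) => [?|?]; case: (m2 =P 0) => [?|?]; simpl in *; lia.
Qed.

Section Inv2.
Variables (T : finType) (e : rel T) (x : T) (p : seq T).
Hypotheses (Hsym : symmetric e) (Hirr : irreflexive e) (Ht : tsp_tour e x p) (Hnt : exists z, z != x).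

Lemma inv_base (E : Emb e 0) :
  6 + ((Ne x p (ef E (tu 0)) (ebu E) == 0) || (Ne x p (ef E (tv 0)) (ebv E) == 0))
  <= \sum_(w : V 0) vis p (ef E w).
Proof.
set f := ef E.
have dv : 2 * vis p (f n1) = Ne x p (f n1) (f n2) + Ne x p (f n1) (f n3) + Ne x p (f (tv 0)) (ebv E).
  rewrite (@vis_cut _ _ _ _ Hsym Hirr Ht _ E n1 [:: (n1, n2); (n1, n3)]) //.
    by rewrite !big_cons big_nil /= !addn0 ?addnA.
  move=> [[|[|[|[|[|[|i]]]]]] Hi] [[|[|[|[|[|[|j]]]]]] Hj] //.
have cv : 2 <= Ne x p (f n1) (f n2) + Ne x p (f n1) (f n3) + Ne x p (f (tu 0)) (ebu E).
  have := @cut2 _ _ _ _ Hsym Ht _ E (fun w : V 0 => val w != 1) [:: (n1, n2); (n1, n3)].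
  rewrite !big_cons big_nil /= !addn0 ?addnA; apply => //; last by exists ord0.
  move=> [[|[|[|[|[|[|i]]]]]] Hi] [[|[|[|[|[|[|j]]]]]] Hj] //.
have du : 2 * vis p (f ord0) = Ne x p (f ord0) (f n4) + Ne x p (f ord0) (f n5) + Ne x p (f (tu 0)) (ebu E).
  rewrite (@vis_cut _ _ _ _ Hsym Hirr Ht _ E ord0 [:: (ord0, n4); (ord0, n5)]) //.
    by rewrite !big_cons big_nil /= !addn0 ?addnA.
  move=> [[|[|[|[|[|[|i]]]]]] Hi] [[|[|[|[|[|[|j]]]]]] Hj] //.
have cu : 2 <= Ne x p (f ord0) (f n4) + Ne x p (f ord0) (f n5) + Ne x p (f (tv 0)) (ebv E).
  have := @cut2 _ _ _ _ Hsym Ht _ E (fun w : V 0 => val w != 0) [:: (ord0, n4); (ord0, n5)].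
  rewrite !big_cons big_nil /= !addn0 ?addnA; apply => //; last by exists n1.
  move=> [[|[|[|[|[|[|i]]]]]] Hi] [[|[|[|[|[|[|j]]]]]] Hj] //.
have ca := @bound_all _ _ _ _ Hsym Ht _ E.
have H1 : forall w : V 0, 1 <= vis p (ef E w) by move=> w; apply: (vis_ge1 Ht Hnt).
rewrite (_ : \sum_(w : V 0) vis p (ef E w) = \sum_(i < 6) vis p (ef E i)) // sum6.
by apply: arith_base; [apply: H1 ..| exact: dv | exact: cv | exact: du | exact: cu | exact: ca].
Qed.

Lemma sum_decomp k (F : V k.+1 -> nat) :
  \sum_(w : V k.+1) F w = F (inl o0) + F (inl o1) + F (inl o2) + F (inl o3) +
    (\sum_(w : V k) F (inr (inl w)) + \sum_(w : V k) F (inr (inr w))).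
Proof.
rewrite big_sumType big_sumType /=; congr (_ + _).
exact: (sum4 (fun i => F (inl i))).
Qed.

Lemma bead_inv k (E : Emb e k) :
  sz k + ee k + ((Ne x p (ef E (tu k)) (ebu E) == 0) || (Ne x p (ef E (tv k)) (ebv E) == 0))
  <= \sum_(w : V k) vis p (ef E w).
Proof.
elim: k E => [|k IH] E; first by rewrite /= addn0; exact: inv_base.
set f := ef E.
set m1 := Ne x p (f (tu k.+1)) (ebu E).
set m2 := Ne x p (f (tv k.+1)) (ebv E).
set al := Ne x p (f (inl o0)) (f (inl o1)).
set be := Ne x p (f (inl o0)) (f (inl o3)).
set ga := Ne x p (f (inl o1)) (f (inl o2)).
set d1 := Ne x p (f (inr (inl (tu k)))) (f (inl o2)).
set d2 := Ne x p (f (inr (inr (tu k)))) (f (inl o2)).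
set e1 := Ne x p (f (inr (inl (tv k)))) (f (inl o3)).
set e2 := Ne x p (f (inr (inr (tv k)))) (f (inl o3)).
have IH1 : sz k + ee k + ((d1 == 0) || (e1 == 0)) <= \sum_(w : V k) vis p (f (inr (inl w))).
  exact: (IH (sub1 E)).
have IH2 : sz k + ee k + ((d2 == 0) || (e2 == 0)) <= \sum_(w : V k) vis p (f (inr (inr w))).
  exact: (IH (sub2 E)).
have a1 : 2 <= d1 + e1 by exact: (bound_all Hsym Ht (sub1 E)).
have a2 : 2 <= d2 + e2 by exact: (bound_all Hsym Ht (sub2 E)).
have cA : 2 <= m1 + m2 by exact: (bound_all Hsym Ht E).
have vU : 1 <= vis p (f (inl o0)) by apply: (vis_ge1 Ht Hnt).
have vV : 1 <= vis p (f (inl o1)) by apply: (vis_ge1 Ht Hnt).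
have dU : 2 * vis p (f (inl o0)) = m1 + al + be.
  rewrite (@vis_cut _ _ _ _ Hsym Hirr Ht _ E (inl o0) [:: (inl o0, inl o1); (inl o0, inl o3)]) //.
    by rewrite !big_cons big_nil /= !addn0 addnC addnA.
  move=> [i|[w|w]] [j|[w'|w']] /=;
    try (case: i => [[|[|[|[|i]]]] Hi] //);
    try (case: j => [[|[|[|[|j]]]] Hj] //);
    rewrite /isE /link ?xpair_eqE /= ?andbF ?andbT ?orbF ?orbT //;
    try (by move=> /eqP ->; rewrite ?eqxx ?tu_neq_tv' ?tv_neq_tu' ?andbF ?andbT ?orbF ?orbT).
have dV : 2 * vis p (f (inl o1)) = al + ga + m2.
  rewrite (@vis_cut _ _ _ _ Hsym Hirr Ht _ E (inl o1) [:: (inl o0, inl o1); (inl o1, inl o2)]) //.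
    by rewrite !big_cons big_nil /= !addn0.
  move=> [i|[w|w]] [j|[w'|w']] /=;
    try (case: i => [[|[|[|[|i]]]] Hi] //);
    try (case: j => [[|[|[|[|j]]]] Hj] //);
    rewrite /isE /link ?xpair_eqE /= ?andbF ?andbT ?orbF ?orbT //;
    try (by move=> /eqP ->; rewrite ?eqxx ?tu_neq_tv' ?tv_neq_tu' ?andbF ?andbT ?orbF ?orbT).
have dA : 2 * vis p (f (inl o2)) = ga + d1 + d2.
  rewrite (@vis_cut _ _ _ _ Hsym Hirr Ht _ E (inl o2)
    [:: (inl o1, inl o2); (inr (inl (tu k)), inl o2); (inr (inr (tu k)), inl o2)]) //.
    by rewrite !big_cons big_nil /= !addn0 !addnA.
  move=> [i|[w|w]] [j|[w'|w']] /=;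
    try (case: i => [[|[|[|[|i]]]] Hi] //);
    try (case: j => [[|[|[|[|j]]]] Hj] //);
    rewrite /isE /link ?xpair_eqE /= ?andbF ?andbT ?orbF ?orbT //;
    try (by move=> /eqP ->; rewrite ?eqxx ?tu_neq_tv' ?tv_neq_tu' ?andbF ?andbT ?orbF ?orbT).
have dB : 2 * vis p (f (inl o3)) = be + e1 + e2.
  rewrite (@vis_cut _ _ _ _ Hsym Hirr Ht _ E (inl o3)
    [:: (inl o0, inl o3); (inr (inl (tv k)), inl o3); (inr (inr (tv k)), inl o3)]) //.
    by rewrite !big_cons big_nil /= !addn0 !addnA.
  move=> [i|[w|w]] [j|[w'|w']] /=;
    try (case: i => [[|[|[|[|i]]]] Hi] //);
    try (case: j => [[|[|[|[|j]]]] Hj] //);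
    rewrite /isE /link ?xpair_eqE /= ?andbF ?andbT ?orbF ?orbT //;
    try (by move=> /eqP ->; rewrite ?eqxx ?tu_neq_tv' ?tv_neq_tu' ?andbF ?andbT ?orbF ?orbT).
have cI : 2 <= be + ga.
  have := @cut2 _ _ _ _ Hsym Ht _ E (fun w : V k.+1 => match w with inl i => 2 <= val i | inr _ => true end)
    [:: (inl o0, inl o3); (inl o1, inl o2)].
  rewrite !big_cons big_nil /= !addn0; apply => //; last by exists (inl o2).
  move=> [i|[w|w]] [j|[w'|w']] /=;
    try (case: i => [[|[|[|[|i]]]] Hi] //);
    try (case: j => [[|[|[|[|j]]]] Hj] //);
    rewrite /isE /link ?xpair_eqE /= ?andbF ?andbT ?orbF ?orbT //;
    try (by move=> /eqP ->; rewrite ?eqxx ?tu_neq_tv' ?tv_neq_tu' ?andbF ?andbT ?orbF ?orbT).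
have cIU : 2 <= al + ga + m1.
  have := @cut2 _ _ _ _ Hsym Ht _ E (fun w : V k.+1 => match w with inl i => val i != 1 | inr _ => true end)
    [:: (inl o0, inl o1); (inl o1, inl o2)].
  rewrite !big_cons big_nil /= !addn0; apply => //; last by exists (inl o2).
  move=> [i|[w|w]] [j|[w'|w']] /=;
    try (case: i => [[|[|[|[|i]]]] Hi] //);
    try (case: j => [[|[|[|[|j]]]] Hj] //);
    rewrite /isE /link ?xpair_eqE /= ?andbF ?andbT ?orbF ?orbT //;
    try (by move=> /eqP ->; rewrite ?eqxx ?tu_neq_tv' ?tv_neq_tu' ?andbF ?andbT ?orbF ?orbT).
have cIV : 2 <= al + be + m2.
  have := @cut2 _ _ _ _ Hsym Ht _ E (fun w : V k.+1 => match w with inl i => val i != 0 | inr _ => true end)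
    [:: (inl o0, inl o1); (inl o0, inl o3)].
  rewrite !big_cons big_nil /= !addn0; apply => //; last by exists (inl o2).
  move=> [i|[w|w]] [j|[w'|w']] /=;
    try (case: i => [[|[|[|[|i]]]] Hi] //);
    try (case: j => [[|[|[|[|j]]]] Hj] //);
    rewrite /isE /link ?xpair_eqE /= ?andbF ?andbT ?orbF ?orbT //;
    try (by move=> /eqP ->; rewrite ?eqxx ?tu_neq_tv' ?tv_neq_tu' ?andbF ?andbT ?orbF ?orbT).
rewrite sum_decomp.
have H := @arith_step _ _ _ _ _ _ _ _ _ _ _ _ _ _ _ _ _ dU dV dA dB vU vV cI cIU cIV cA a1 a2 IH1 IH2.
rewrite [sz _]/= [ee _]/=.
move: H; set bb := ((m1 == 0) || (m2 == 0)); lia.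
Qed.

End Inv2.

Section Final.
Variable k : nat.

Lemma out1 (w : V k) (z : TG k) : eG (inl w) z ->
  (exists w', z = inl w') \/ (w = tu k /\ z = inr (tv k)) \/ (w = tv k /\ z = inr (tu k)).
Proof.
case: z => [w'|w'] /=; first by left; exists w'.
rewrite /cross_link => /orP [] /andP [/eqP -> /eqP ->]; right; [right|left]; by [].
Qed.

Lemma out2 (w : V k) (z : TG k) : eG (inr w) z ->
  (exists w', z = inr w') \/ (w = tu k /\ z = inl (tv k)) \/ (w = tv k /\ z = inl (tu k)).
Proof.
case: z => [w'|w'] /=; last by left; exists w'.
rewrite /cross_link => /orP [] /andP [/eqP -> /eqP ->]; right; [right|left]; by [].
Qed.

Definition emb1 : Emb (@eG k) k :=
  @Build_Emb (TG k) (@eG k) k (fun w => inl w) (inr (tv k)) (inr (tu k)) (@inl_inj _ _)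
    (fun w w' => erefl) out1 (fun w => erefl) (fun w => erefl).
Definition emb2 : Emb (@eG k) k :=
  @Build_Emb (TG k) (@eG k) k (fun w => inr w) (inl (tv k)) (inl (tu k)) (@inr_inj _ _)
    (fun w w' => erefl) out2 (fun w => erefl) (fun w => erefl).

Lemma card_V : #|V k| = sz k.
Proof. by elim: k => [|j IH] /=; rewrite ?card_ord // !card_sum card_ord IH; lia. Qed.

End Final.

Lemma sz_form k : sz k + 4 = 10 * 2 ^ k.
Proof. elim: k => [|k IH] //=; rewrite expnS; lia. Qed.
Lemma ee_form k : ee k + 2 = 2 * 2 ^ k.
Proof. elim: k => [|k IH] //=; rewrite expnS; lia. Qed.
Lemma sz_ge k : k <= sz k.
Proof. elim: k => [|k IH] //=; lia. Qed.

Lemma tour_bound k (x : TG k) (p : seq (TG k)) : tsp_tour (@eG k) x p ->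
  6 * #|TG k| <= 5 * size p + 12.
Proof.
move=> Ht.
have Hsym := @eG_sym k; have Hirr := @eG_irr k.
have Hnt : exists z, z != x.
  by case: x Ht => w _; [exists (inr w) | exists (inl w)].
have H1 := bead_inv Hsym Hirr Ht Hnt (emb1 k).
have H2 := bead_inv Hsym Hirr Ht Hnt (emb2 k).
rewrite (size_vis p) big_sumType /=.
have : #|TG k| = 2 * sz k by rewrite /TG card_sum card_V; lia.
move=> ->.
have := sz_form k; have := ee_form k.
move: H1 H2 => /=.
set a := (_ || _); set b := (_ || _).
lia.
Qed.


Unset Implicit Arguments. Set Strict Implicit. Set Printing Implicit Defensive.
Import Order.TTheory GRing.Theory Num.Theory.
Local Open Scope ring_scope.

Theorem theorem2 (R : realType) (eps : R) (heps : 0 < eps) :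
  exists (T : finType) (e : rel T),
    [/\ simple_graph e, cubic e, bipartite e, connected_graph e &
        (0 < #|T|)%N] /\
        forall (x : T) (p : seq T), tsp_tour e x p ->
          (6 / 5 - eps) * (#|T|%:R) <= (size p)%:R.
Proof.
have h0 : 0 <= 12 / (5 * eps) by rewrite divr_ge0 // mulr_ge0 // ltW.
set N := Num.Def.archi_bound (12 / (5 * eps)).
have hb : 12 / (5 * eps) < N%:R := archi_boundP h0.
have hcard : #|TG N| = (2 * sz N)%N by rewrite /TG card_sum card_V; lia.
exists (TG N), (@eG N); split.
  split.
  - by split; [exact: eG_sym | exact: eG_irr].
  - exact: eG_cubic.
  - exact: eG_bip.
  - exact: eG_conn.
  - rewrite hcard; have := sz_form N; lia.
move=> x p Ht.
have hT := tour_bound Ht.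
set n := #|TG N| in hT *; set L := size p in hT *.
have hn : (N <= n)%N by rewrite /n hcard; have := sz_ge N; lia.
have h1 : (6 * n)%:R <= (5 * L + 12)%:R :> R by rewrite ler_nat.
rewrite natrD !natrM in h1.
have h2 : 12 / (5 * eps) < n%:R by apply: lt_le_trans hb _; rewrite ler_nat.
have h5 : 0 < 5 * eps by rewrite mulr_gt0.
rewrite ltr_pdivrMr // in h2.
have -> : (6 / 5 - eps) * n%:R = 6 / 5 * n%:R - eps * n%:R by ring.
have h3 : 12 < 5 * (eps * n%:R) by rewrite mulrA mulrC.
move: h1 h3; move: (eps * n%:R) => EN.
move: (n%:R) (L%:R) => a b.
lra.
Qed.
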